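(* Let $\mathcal{A}$ be a separating union-closed family with base set $[n]$ and height $h=4$, and suppose $|\mathcal{B}(\mathcal{A})|=3$. Let $B=b(\mathcal{A}_{<n/2})$. Then $|B| \in \{n-1, n\}$.
   Context: A family of sets $\mathcal{A}$ is union-closed if it is a finite family of distinct finite sets with at least one nonempty member set, and $X,Y\in\mathcal{A}$ implies $X\cup Y\in\mathcal{A}$ (the empty set may be a member). For a family $\mathcal{F}$, $b(\mathcal{F})=\bigcup_{F\in\mathcal{F}}F$; the base set $b(\mathcal{A})$ is denoted $[n]=\{1,\dots,n\}$. $\mathcal{A}$ is separating if for any two distinct $x,y\in[n]$ there is $A\in\mathcal{A}$ containing exactly one of $x,y$. A chain in $\mathcal{A}$ is a subfamily any two distinct members of which are comparable under proper inclusion; the height $h$ of $\mathcal{A}$ is the maximum size of a chain in $\mathcal{A}$. For real $x\ge 0$, $\mathcal{A}_{<x}=\{A\in\mathcal{A} : |A|<x\}$. For $\mathcal{S}\subseteq\mathcal{A}$ and $S\in\mathcal{S}$, $\mathrm{irr}_{\mathcal{S}}(S)=\{s\in S : s\notin b(\mathcal{S}\setminus\{S\})\}$, and $\mathcal{S}$ is irredundant if $\mathrm{irr}_{\mathcal{S}}(S)\neq\emptyset$ for every $S\in\mathcal{S}$. With $B=b(\mathcal{A}_{<n/2})$, $\mathcal{B}(\mathcal{A})$ denotes any irredundant subfamily of $\mathcal{A}_{<n/2}$ of minimum size such that $b(\mathcal{B}(\mathcal{A}))=B$. *)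

(* Defs.v *)
From mathcomp Require Import all_boot.
Set Implicit Arguments. Unset Strict Implicit. Unset Printing Implicit Defensive.

Section UC.
Variable n : nat.
Notation fam := {set {set 'I_n}}.

Definition bset (F : fam) : {set 'I_n} := \bigcup_(X in F) X.

(* union-closed family (finite, distinct sets automatically), with a
   nonempty member *)
Definition union_closed (A : fam) : Prop :=
  (exists2 X, X \in A & X != set0) /\
  (forall X Y, X \in A -> Y \in A -> X :|: Y \in A).

Definition separating (A : fam) : Prop :=
  forall x y : 'I_n, x != y ->
    exists2 X, X \in A & (x \in X) != (y \in X).

Definition is_chain (C : fam) : bool :=
  [forall X in C, forall Y in C, (X != Y) ==> ((X \proper Y) || (Y \proper X))].

Definition height (A : fam) : nat :=
  \max_(C in powerset A | is_chain C) #|C|.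

(* A_{<n/2} : members with |X| < n/2, i.e. 2|X| < n *)
Definition small_part (A : fam) : fam := [set X in A | (#|X|).*2 < n].

Definition irr (S : fam) (X : {set 'I_n}) : {set 'I_n} :=
  X :\: bset (S :\ X).

Definition irredundant (S : fam) : bool := [forall X in S, irr S X != set0].

Definition B_candidate (A : fam) (S : fam) : bool :=
  [&& S \subset small_part A, irredundant S & bset S == bset (small_part A)].

Definition is_BA (A : fam) (S : fam) : Prop :=
  B_candidate A S /\ forall S', B_candidate A S' -> #|S| <= #|S'|.
End UC.

(* Main.v *)
Require Import Defs.
From mathcomp Require Import all_boot.
From mathcomp Require Import zify.

Lemma chain5 n (a b c d e : {set 'I_n}) :
  a \proper b -> b \proper c -> c \proper d -> d \proper e ->
  is_chain (a |: (b |: (c |: (d |: [set e])))) /\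
  #|a |: (b |: (c |: (d |: [set e])))| = 5.
Proof.
move=> ab bc cd de.
have ac := proper_trans ab bc. have ad := proper_trans ac cd.
have ae := proper_trans ad de. have bd := proper_trans bc cd.
have be := proper_trans bd de. have ce := proper_trans cd de.
split.
  apply/forall_inP => X; rewrite !inE => /orP[/eqP->|/orP[/eqP->|/orP[/eqP->|/orP[/eqP->|/eqP->]]]];
  apply/forall_inP => Y; rewrite !inE => /orP[/eqP->|/orP[/eqP->|/orP[/eqP->|/orP[/eqP->|/eqP->]]]];
  by rewrite ?eqxx ?ab ?bc ?cd ?de ?ac ?ad ?ae ?bd ?be ?ce ?orbT ?implybT.
rewrite !cardsU1 cards1 !inE.
by rewrite (negbTE (proper_neq ab)) (negbTE (proper_neq ac)) (negbTE (proper_neq ad))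
  (negbTE (proper_neq ae)) (negbTE (proper_neq bc)) (negbTE (proper_neq bd))
  (negbTE (proper_neq be)) (negbTE (proper_neq cd)) (negbTE (proper_neq ce))
  (negbTE (proper_neq de)).
Qed.

Lemma setT_in n (A : {set {set 'I_n}}) :
  union_closed A -> bset A = setT -> setT \in A.
Proof.
move=> [[X XA Xn0] UC] bA.
have : (bset A == set0) || (bset A \in A).
  rewrite /bset; apply: (big_ind (fun Z => (Z == set0) || (Z \in A))).
  - by rewrite eqxx.
  - move=> Z W /orP[/eqP->|ZA] /orP[/eqP->|WA]; rewrite ?set0U ?setU0 ?eqxx ?ZA ?WA ?orbT //.
    by rewrite (UC _ _ ZA WA) orbT.
  - by move=> Z ->; rewrite orbT.
rewrite bA => /orP[/eqP T0|//].
by case/eqP: Xn0; apply/eqP; rewrite -subset0 -T0 subsetT.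
Qed.

Theorem propositionF (n : nat) (A : {set {set 'I_n}}) :
  union_closed A -> bset A = setT -> separating A -> height A = 4 ->
  (exists2 S, is_BA A S & #|S| = 3) ->
  #|bset (small_part A)| = n.-1 \/ #|bset (small_part A)| = n.
Proof.
move=> UCA bA sep hA [S [/and3P [sub irrS /eqP bS] _] cS].
set B := bset (small_part A).
have : #|B| <= n by have := max_card B; rewrite card_ord.
case: (ltnP #|B| n.-1) => [lt _|ge le]; last first.
  lia.
exfalso.
have : 1 < #|~: B|.
  have := cardsC B; rewrite card_ord => h. lia.
case/card_gt1P => x [y [xB yB xy]].
rewrite !inE in xB yB.
have [X XA Xxy] := sep x y xy.
have SA : {subset S <= A}.
  by move=> Z /(subsetP sub); rewrite inE => /andP[].
have /card_gt0P [S1 S1S] : 0 < #|S| by rewrite cS.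
have : #|S :\ S1| == 2 by have := cardsD1 S1 S; rewrite S1S cS add1n => -[<-].
case/cards2P => S2 [S3 [n23 eS']].
have /setD1P [n12 S2S] : S2 \in S :\ S1 by rewrite eS' !inE eqxx.
have /setD1P [n13 S3S] : S3 \in S :\ S1 by rewrite eS' !inE eqxx orbT.
have subB : forall Z, Z \in S -> Z \subset B.
  by move=> Z ZS; rewrite /B -bS /bset (bigcup_sup Z ZS).
have irrP : forall Z, Z \in S -> exists2 z, z \in Z & forall W, W \in S -> W != Z -> z \notin W.
  move=> Z ZS; have /set0Pn [z] := forall_inP irrS Z ZS.
  rewrite /irr !inE => /andP [zn zZ]; exists z => // W WS WZ.
  apply: contra zn => zW; apply/bigcupP; exists W => //; by rewrite !inE WZ WS.
have U12 : S1 \proper S1 :|: S2.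
  apply/properP; split; first exact: subsetUl.
  have [z zS2 hz] := irrP S2 S2S; exists z; first by rewrite inE zS2 orbT.
  by apply: hz; rewrite // eq_sym.
set U := S1 :|: S2 :|: S3.
have U23 : S1 :|: S2 \proper U.
  apply/properP; split; first exact: subsetUl.
  have [z zS3 hz] := irrP S3 S3S; exists z; first by rewrite inE zS3 orbT.
  by rewrite inE negb_or hz // ?hz // eq_sym.
have UB : U \subset B by rewrite !subUset !subB.
have xU : x \notin U by apply: contra xB => /(subsetP UB).
have yU : y \notin U by apply: contra yB => /(subsetP UB).
have U34 : U \proper X :|: U.
  apply/properP; split; first exact: subsetUr.
  move: Xxy; case: (boolP (x \in X)) => xX; case: (boolP (y \in X)) => yX //= _.
    by exists x; rewrite // inE xX.
  by exists y; rewrite // inE yX.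
have U45 : X :|: U \proper setT.
  apply/properP; split; first exact: subsetT.
  move: Xxy; case: (boolP (x \in X)) => xX; case: (boolP (y \in X)) => yX //= _.
    by exists y; [rewrite in_setT | rewrite in_setU (negbTE yX) (negbTE yU)].
  by exists x; [rewrite in_setT | rewrite in_setU (negbTE xX) (negbTE xU)].
have [ch c5] := @chain5 n _ _ _ _ _ U12 U23 U34 U45.
have [_ UC] := UCA.
have Pin : (S1 |: (S1 :|: S2 |: (U |: (X :|: U |: [set setT])))) \in powerset A.
  rewrite powersetE; apply/subsetP => Z; rewrite !inE.
  have S1A := SA _ S1S; have S2A := SA _ S2S; have S3A := SA _ S3S.
  have TA := @setT_in n A UCA bA.
  by case/orP=> [/eqP->|/orP[/eqP->|/orP[/eqP->|/orP[/eqP->|/eqP->]]]]; rewrite // /U ?UC.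
have := leq_bigmax_cond (F := fun C => #|C|) (P := fun C => (C \in powerset A) && is_chain C) _ (introT andP (conj Pin ch)).
by rewrite -/(height A) hA c5.
Qed.
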